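(* Let $t_0\in\mathbb{R}$, $q_0\ge0$, $\mu>0$, $\alpha>0$, let $X:[t_0,+\infty)\to[0,+\infty)$ be continuous, and let $q$ solve $$q'(t)=X(t)-\Big[\mu+e^{-\alpha q(t)}\big(\min\{\mu,X(t)\}-\mu\big)\Big],\qquad q(t_0)=q_0.$$ Suppose there exist $t_X>t_0$ and $X_\infty<\mu$ with $X(t)\le X_\infty$ for all $t\ge t_X$, and let $q_X=q(t_X)>0$. For $0<\epsilon\le q_X$ define the emptying time $T_\epsilon(q_X)=\inf\{t\ge t_X: q(t)\le\epsilon\}$. Then $$T_\epsilon(q_X)\le t_X+\frac{q_X-\epsilon}{\mu-X_\infty}+\frac{1}{\alpha(\mu-X_\infty)}\log\!\Big(\frac{q_X}{\epsilon}\Big).$$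
   Context: This ODE is the logistic queue model: $q$ is the queue size, $X$ the inflow, $\mu>0$ the maximum outflow rate and $\alpha>0$ a fixed model parameter. *)

(* Defs.v *)
From Stdlib Require Import Reals.
Open Scope R_scope.

Definition queue_rhs (mu alpha x qv : R) : R :=
  x - (mu + exp (- alpha * qv) * (Rmin mu x - mu)).

Definition is_inf (E : R -> Prop) (m : R) : Prop :=
  (forall x, E x -> m <= x) /\
  (forall b, (forall x, E x -> b <= x) -> b <= m).

(* Main.v *)
Require Import Defs.
From Stdlib Require Import Reals Lra Classical.
Open Scope R_scope.

Lemma ln_le_aux x y : 0 < x -> x <= y -> ln x <= ln y.
Proof.
  intros Hx Hxy. destruct (Rle_lt_or_eq_dec _ _ Hxy) as [H|H].
  - left. apply ln_increasing; auto.
  - subst; lra.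
Qed.

Lemma rhs_bound mu alpha Xinf x qv :
  0 < alpha -> Xinf < mu -> x <= Xinf -> 0 < qv ->
  queue_rhs mu alpha x qv * (1 + / alpha * / qv) + (mu - Xinf) <= 0.
Proof.
  intros Ha Hm Hx Hq. unfold queue_rhs.
  rewrite Rmin_right by lra.
  set (e := exp (- alpha * qv)).
  set (y := / alpha * / qv).
  assert (Hy : 0 < y) by (unfold y; apply Rmult_lt_0_compat; apply Rinv_0_lt_compat; lra).
  assert (Hxy : (alpha * qv) * y = 1) by (unfold y; field; lra).
  assert (Hax : 0 < alpha * qv) by nra.
  assert (Hex : exp (alpha * qv) > 1 + alpha * qv) by (apply exp_ineq1; lra).
  assert (Hee : e * exp (alpha * qv) = 1).
  { unfold e. rewrite <- exp_plus. replace (- alpha * qv + alpha * qv) with 0 by ring. apply exp_0. }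
  assert (He0 : 0 < e) by (unfold e; apply exp_pos).
  assert (He1 : e * (1 + alpha * qv) <= 1) by nra.
  assert (HP : (1 - e) * (1 + y) >= 1).
  { assert (y * (e * (1 + alpha * qv)) <= y) by nra. nra. }
  assert (He2 : 1 - e >= 0) by nra.
  replace (x - (mu + e * (x - mu))) with ((x - mu) * (1 - e)) by ring.
  nra.
Qed.

Theorem mainTheorem4
  (t0 q0 mu alpha : R) (X q : R -> R)
  (Hq0 : 0 <= q0) (Hmu : 0 < mu) (Halpha : 0 < alpha)
  (HXnn : forall t, t0 <= t -> 0 <= X t)
  (HXcont : forall t, t0 <= t -> limit1_in X (fun s => t0 <= s) (X t) t)
  (Hqcont0 : limit1_in q (fun s => t0 <= s) q0 t0)
  (Hode : forall t, t0 < t -> derivable_pt_lim q t (queue_rhs mu alpha (X t) (q t)))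
  (Hinit : q t0 = q0)
  (tX Xinf : R) (HtX : t0 < tX) (HXinf : Xinf < mu)
  (HXbound : forall t, tX <= t -> X t <= Xinf)
  (HqX : 0 < q tX)
  (eps : R) (Heps : 0 < eps) (HepsqX : eps <= q tX) :
  exists T : R,
    is_inf (fun t => tX <= t /\ q t <= eps) T /\
    T <= tX + (q tX - eps) / (mu - Xinf)
           + / (alpha * (mu - Xinf)) * ln (q tX / eps).
Proof.
  set (C := mu - Xinf).
  assert (HC : 0 < C) by (unfold C; lra).
  set (B := tX + (q tX - eps) / C + / (alpha * C) * ln (q tX / eps)).
  assert (Hlnd : ln (q tX / eps) = ln (q tX) - ln eps).
  { unfold Rdiv. rewrite ln_mult, ln_Rinv; try lra.
    apply Rinv_0_lt_compat; lra. }
  assert (Hln0 : 0 <= ln (q tX / eps)).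
  { rewrite <- ln_1. apply ln_le_aux; [lra|].
    apply (Rmult_le_reg_r eps); [lra|]. unfold Rdiv.
    rewrite Rmult_assoc, Rinv_l; lra. }
  assert (HtB : tX <= B).
  { unfold B. assert (0 <= (q tX - eps) / C) by (unfold Rdiv; apply Rmult_le_pos; [lra|left; apply Rinv_0_lt_compat; lra]).
    assert (0 <= / (alpha * C) * ln (q tX / eps)).
    { apply Rmult_le_pos; auto. left. apply Rinv_0_lt_compat. nra. }
    lra. }
  assert (Hex : exists t, tX <= t <= B /\ q t <= eps).
  { apply NNPP; intro Hn.
    assert (Hgt : forall t, tX <= t <= B -> eps < q t).
    { intros t Ht. apply Rnot_le_lt. intro H. apply Hn. exists t. auto. }
    assert (HqXe : eps < q tX) by (apply Hgt; lra).
    assert (HtB' : tX < B).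
    { unfold B. assert (0 < (q tX - eps) / C) by (apply Rdiv_lt_0_compat; lra).
      assert (0 <= / (alpha * C) * ln (q tX / eps)).
      { apply Rmult_le_pos; auto. left. apply Rinv_0_lt_compat. nra. }
      lra. }
    destruct (MVT_cor2 (fun t => q t + / alpha * ln (q t) + C * t)
      (fun t => queue_rhs mu alpha (X t) (q t) * (1 + / alpha * / q t) + C) tX B HtB')
      as [c [Hc1 Hc2]].
    { intros c Hc. assert (Hqc : 0 < q c) by (specialize (Hgt c Hc); lra).
      assert (Hd := Hode c ltac:(lra)).
      assert (H1 := derivable_pt_lim_comp q ln c _ _ Hd (derivable_pt_lim_ln _ Hqc)).
      assert (H2 := derivable_pt_lim_scal _ (/ alpha) c _ H1).
      assert (H3 := derivable_pt_lim_plus _ _ c _ _ Hd H2).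
      assert (H4 := derivable_pt_lim_scal _ C c _ (derivable_pt_lim_id c)).
      assert (H5 := derivable_pt_lim_plus _ _ c _ _ H3 H4).
      replace (queue_rhs mu alpha (X c) (q c) * (1 + / alpha * / q c) + C)
        with (queue_rhs mu alpha (X c) (q c) + / alpha * (/ q c * queue_rhs mu alpha (X c) (q c)) + C * 1) by ring.
      exact H5. }
    assert (Hneg : queue_rhs mu alpha (X c) (q c) * (1 + / alpha * / q c) + C <= 0).
    { apply rhs_bound; auto. apply HXbound; lra.
      assert (eps < q c) by (apply Hgt; lra). lra. }
    assert (HqB : eps < q B) by (apply Hgt; lra).
    assert (Hle : q B + / alpha * ln (q B) + C * B <= q tX + / alpha * ln (q tX) + C * tX).
    { assert (0 <= B - tX) by lra.
      assert ((queue_rhs mu alpha (X c) (q c) * (1 + / alpha * / q c) + C) * (B - tX) <= 0) by nra.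
      lra. }
    assert (HCB : C * B = C * tX + (q tX - eps) + / alpha * (ln (q tX) - ln eps)).
    { unfold B. rewrite Hlnd. field. lra. }
    assert (Hl : ln eps < ln (q B)) by (apply ln_increasing; lra).
    assert (0 < / alpha) by (apply Rinv_0_lt_compat; lra).
    nra. }
  destruct Hex as [ts [Hts1 Hts2]].
  destruct (completeness (fun x => tX <= - x /\ q (- x) <= eps)) as [m [Hm1 Hm2]].
  { exists (- tX). intros x [Hx _]. lra. }
  { exists (- ts). rewrite Ropp_involutive. split; lra. }
  exists (- m). split; [split|].
  - intros x [Hx1 Hx2]. assert (- x <= m).
    { apply Hm1. rewrite Ropp_involutive. auto. } lra.
  - intros b Hb. assert (m <= - b).
    { apply Hm2. intros x Hx. assert (b <= - x) by (apply Hb; auto). lra. } lra.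
  - assert (- ts <= m).
    { apply Hm1. rewrite Ropp_involutive. split; lra. }
    fold C. fold B. lra.
Qed.
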